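(* Let $d\ge 3$ and let $j$ be an integer with $0\le j\le d-1$. (a) If $d$ is odd and $d-j$ is even, then $\operatorname{triv}(d,j)=\operatorname{sign}(d,j)=\left\lfloor \frac{3d-2j-3}{6}\right\rfloor-\frac{d-j-2}{2}$. (b) If $d$ is odd and $d-j$ is odd, then $\operatorname{triv}(d,j)=\left\lfloor \frac{3d-2j-3}{6}\right\rfloor-\frac{d-j-3}{2}$ and $\operatorname{sign}(d,j)=\left\lfloor \frac{3d-2j-3}{6}\right\rfloor-\frac{d-j-1}{2}$. (c) If $d$ is even and $d-j$ is even, then $\operatorname{triv}(d,j)=\left\lfloor \frac{3d-2j}{6}\right\rfloor-\frac{d-j-2}{2}$ and $\operatorname{sign}(d,j)=\left\lfloor \frac{3d-2j}{6}\right\rfloor-\frac{d-j}{2}$. (d) If $d$ is even and $d-j$ is odd, then $\operatorname{triv}(d,j)=\operatorname{sign}(d,j)=\left\lfloor \frac{3d-2j}{6}\right\rfloor-\frac{d-j-1}{2}$.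
   Context: $\Bbbk$ is an algebraically closed field of characteristic $0$. For an integer $d\ge 1$, $A(d)=\Bbbk[x_1,x_2,x_3]/(x_1^d,x_2^d,x_3^d)=\bigoplus_j A(d)_j$ with its standard grading. $S_3$ acts on $A(d)$ by permuting variables. The linear map $E:A(d)_{j+1}\to A(d)_j$ is defined on the monomial basis by $E(x_1^{a_1}x_2^{a_2}x_3^{a_3})=\sum_{k=1}^{3} a_k(d-a_k)\,x_1^{a_1}\cdots x_k^{a_k-1}\cdots x_3^{a_3}$; it commutes with the $S_3$-action. $\operatorname{triv}(d,j)$ and $\operatorname{sign}(d,j)$ denote the multiplicities of the trivial and sign representations of $S_3$ in $\operatorname{Ker}(E)\cap A(d)_j$. *)

(* Defs.v *)
From HB Require Import structures.
From mathcomp Require Import all_boot all_order all_algebra all_fingroup.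
Set Implicit Arguments. Unset Strict Implicit. Unset Printing Implicit Defensive.
Import GRing.Theory.
Local Open Scope ring_scope.

(* Monomials x1^a1 x2^a2 x3^a3 of A(d) = k[x1,x2,x3]/(x1^d,x2^d,x3^d):
   exponent vectors a : 'I_3 -> 'I_d (i.e. 0 <= a_k < d). *)
Definition mono (d : nat) := {ffun 'I_3 -> 'I_d}.
Definition mdeg d (a : mono d) : nat := (\sum_(k < 3) (a k : nat))%N.

(* An element of A(d) is a row vector of coefficients, indexed by monomials
   via enum_rank: the coefficient of x^a in v is v 0 (enum_rank a). *)
Notation N d := #|mono d|.
Definition mon d (i : 'I_(N d)) : mono d := enum_val i.

Definition lower_k d (k : 'I_3) (a b : mono d) : bool :=
  ((a k : nat) == (b k).+1) && [forall l, (l != k) ==> (a l == b l)].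

(* Matrix of E (acting on row vectors on the right):
   E(x^a) = sum_k a_k (d - a_k) x^(a - e_k). *)
Definition Emx (F : fieldType) d : 'M[F]_(N d) :=
  \matrix_(i, j) \sum_(k < 3)
     (if lower_k k (mon i) (mon j)
      then ((mon i k : nat) * (d - mon i k))%:R else 0).

(* Permutation action of sigma in S_3: x_k |-> x_(sigma k), so
   x^a |-> x^b with b (sigma k) = a k, i.e. b = a o sigma^-1. *)
Definition Pmx (F : fieldType) d (s : 'S_3) : 'M[F]_(N d) :=
  \matrix_(i, j) (mon j == [ffun l => mon i ((s^-1)%g l)])%:R.

(* Diagonal matrix killing exactly the degree-j part: v *m Dmx j = 0 iff
   v lies in A(d)_j. *)
Definition Dmx (F : fieldType) d (j : nat) : 'M[F]_(N d) :=
  \matrix_(i, i') ((i == i') && (mdeg (mon i) != j))%:R.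

(* The subspace of Ker(E) ∩ A(d)_j on which S_3 acts through the character
   chi (chi = trivial or sign), i.e. the chi-isotypic component. *)
Definition isotypic (F : fieldType) d j (chi : 'S_3 -> F) : 'M[F]_(N d) :=
  (kermx (@Dmx F d j) :&: kermx (@Emx F d)
   :&: \bigcap_(s : 'S_3) kermx (@Pmx F d s - (chi s)%:M))%MS.

(* Multiplicities of the (one-dimensional) trivial and sign representations
   in Ker(E) ∩ A(d)_j = dimensions of the corresponding isotypic parts. *)
Definition triv (F : fieldType) d j : nat := \rank (@isotypic F d j (fun _ => 1)).
Definition sign (F : fieldType) d j : nat :=
  \rank (@isotypic F d j (fun s => (-1) ^+ odd_perm s)).

(* Main.v *)
Require Import Defs.
From HB Require Import structures.
From mathcomp Require Import all_boot all_order all_algebra all_fingroup.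
From mathcomp Require Import zify ring.
Set Implicit Arguments. Unset Strict Implicit. Unset Printing Implicit Defensive.
Import GRing.Theory.
Local Open Scope ring_scope.

Lemma idem_aux (F : fieldType) n r (C : 'M[F]_(n, r)) (R : 'M[F]_(r, n)) C' R' :
  C' *m C = 1%:M -> R *m R' = 1%:M -> (C *m R) *m (C *m R) = C *m R -> R *m C = 1%:M.
Proof.
move=> HC HR /(congr1 (fun M => C' *m M *m R')).
by rewrite /= !mulmxA HC mul1mx -!mulmxA HR mulmx1 => ->.
Qed.
Lemma rank_idem (F : fieldType) n (Q : 'M[F]_n) : Q *m Q = Q -> \tr Q = (\rank Q)%:R.
Proof.
move=> QQ.
have [C' HC] := row_fullP (col_base_full Q).
have [R' HR] := row_freeP (row_base_free Q).
have e : row_base Q *m col_base Q = 1%:M.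
  by have := idem_aux HC HR; rewrite mulmx_base QQ; apply.
by rewrite -{1}(mulmx_base Q) mxtrace_mulC e mxtrace1.
Qed.

Definition k0 : 'I_3 := @Ordinal 3 0 isT.
Definition k1 : 'I_3 := @Ordinal 3 1 isT.
Definition k2 : 'I_3 := @Ordinal 3 2 isT.
Definition t01 : 'S_3 := tperm k0 k1.
Definition t02 : 'S_3 := tperm k0 k2.
Definition t12 : 'S_3 := tperm k1 k2.
Definition c1 : 'S_3 := (t01 * t12)%g.
Definition c2 : 'S_3 := (t12 * t01)%g.
Definition L3 := [:: 1%g; t01; t02; t12; c1; c2].
Lemma tpermE' (T : finType) (x y z : T) : tperm x y z = if z == x then y else if z == y then x else z.
Proof. by case: tpermP => [->|->|/eqP/negbTE-> /eqP/negbTE->]; rewrite ?eqxx //; case: eqP => [->|]. Qed.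
Lemma uniqL3 : uniq L3.
Proof.
apply: (@map_uniq _ _ (fun s : 'S_3 => (nat_of_ord (s k0), nat_of_ord (s k1)))).
by rewrite /= /c1 /c2 /t01 /t02 /t12 !permM !tpermE' !perm1.
Qed.
Lemma memL3 s : s \in L3.
Proof.
have : [set s in L3] = [set: 'S_3].
  apply/eqP; rewrite eqEcard subsetT /= cardsT card_Sn cardsE.
  by rewrite (card_uniqP uniqL3).
by move/setP/(_ s); rewrite inE in_setT.
Qed.
Lemma sumS3 (R : nmodType) (g : 'S_3 -> R) : \sum_s g s = g 1%g + g t01 + g t02 + g t12 + g c1 + g c2.
Proof.
transitivity (\sum_(s in L3) g s); first by apply: eq_bigl => s; rewrite memL3.
by rewrite -big_uniq ?uniqL3 //= !big_cons big_nil addr0 !addrA.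
Qed.

Section Counting.
Local Open Scope nat_scope.
Lemma sum_eq_ord d k : \sum_(z < d) ((z : nat) == k) = (k < d).
Proof.
elim: d => [|d IH]; first by rewrite big_ord0.
rewrite big_ord_recr /= IH ltnS leq_eqVlt; case: (ltngtP k d) => h //=.
all: try (move: h; lia).
Qed.

Lemma sum_le_ord d k : \sum_(y < d) ((y : nat) <= k) = minn k.+1 d.
Proof.
elim: d => [|d IH]; first by rewrite big_ord0 minn0.
rewrite big_ord_recr /= IH; case: leqP => h; lia.
Qed.

Lemma La d w j : (j < d)%N -> \sum_(z < d) (w + z == j) = (w <= j).
Proof.
move=> hj; case: (leqP w j) => h.
  have hjw : (j - w < d)%N by lia.
  transitivity (nat_of_bool (j - w < d)); last by rewrite hjw.
  rewrite -(sum_eq_ord d (j - w)); apply: eq_bigr => z _; congr (nat_of_bool _).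
  by apply/eqP/eqP; lia.
rewrite big1 // => z _; case: eqP => //; lia.
Qed.

Lemma sum_tri m : (\sum_(x < m) (m - x)) * 2 = m * m.+1.
Proof.
elim: m => [|m IH]; first by rewrite big_ord0.
rewrite big_ord_recr /= subSnn.
have -> : \sum_(x < m) (m.+1 - x) = \sum_(x < m) (m - x) + m.
  rewrite -[X in _ + X]card_ord -sum1_card -big_split /=; apply: eq_bigr => x _.
  have := ltn_ord x; lia.
lia.
Qed.

Lemma count1 d j : (j < d)%N ->
  (\sum_(x < d) \sum_(y < d) \sum_(z < d) ((x : nat) + y + z == j)) * 2 = j.+1 * j.+2.
Proof.
move=> hj.
have -> : \sum_(x < d) \sum_(y < d) \sum_(z < d) ((x : nat) + y + z == j)
          = \sum_(x < d) ((x <= j) * (j - x).+1).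
  apply: eq_bigr => x _.
  transitivity (\sum_(y < d) ((x : nat) + y <= j)).
    by apply: eq_bigr => y _; rewrite La.
  case: (leqP x j) => h.
    rewrite mul1n -[RHS](_ : minn (j - x).+1 d = (j - x).+1); last by lia.
    rewrite -sum_le_ord; apply: eq_bigr => y _; congr (nat_of_bool _).
    apply/idP/idP; lia.
  by rewrite big1 // => y _; apply/eqP; rewrite eqb0 -ltnNge; lia.
have -> : \sum_(x < d) ((x <= j) * (j - x).+1) = \sum_(x < j.+1) (j.+1 - x).
  rewrite (big_ord_widen d (fun x => j.+1 - x)) // [RHS]big_mkcond /=.
  by apply: eq_bigr => x _; rewrite ltnS; case: leqP => h; lia.
exact: sum_tri.
Qed.

Lemma pick d (g : 'I_d -> nat) x : \sum_(y < d) ((x == y) * g y) = g x.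
Proof.
rewrite (bigD1 x) //= eqxx mul1n big1 ?addn0 // => y hy.
by rewrite eq_sym (negbTE hy).
Qed.

Lemma sum_half d j : (j < d)%N -> \sum_(x < d) ((x : nat) + x <= j) = (j %/ 2).+1.
Proof.
move=> hj; rewrite -[RHS](_ : minn (j %/ 2).+1 d = (j %/ 2).+1); last by lia.
rewrite -sum_le_ord; apply: eq_bigr => x _; congr (nat_of_bool _); apply/idP/idP; lia.
Qed.

Lemma count2a d j : (j < d)%N ->
  \sum_(x < d) \sum_(y < d) \sum_(z < d) (((x : nat) + y + z == j) && (x == y)) = (j %/ 2).+1.
Proof.
move=> hj; rewrite -(sum_half hj); apply: eq_bigr => x _.
rewrite -(@La d _ j hj).
transitivity (\sum_(y < d) ((x == y) * \sum_(z < d) ((x : nat) + y + z == j))).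
  apply: eq_bigr => y _; rewrite big_distrr /=; apply: eq_bigr => z _.
  by rewrite mulnC mulnb.
by rewrite (pick (fun y => \sum_(z < d) ((x : nat) + y + z == j))).
Qed.

Lemma count2b d j : (j < d)%N ->
  \sum_(x < d) \sum_(y < d) \sum_(z < d) (((x : nat) + y + z == j) && (x == z)) = (j %/ 2).+1.
Proof.
move=> hj; rewrite -(sum_half hj); apply: eq_bigr => x _.
rewrite -(@La d _ j hj); apply: eq_bigr => y _.
transitivity (\sum_(z < d) ((x == z) * ((x : nat) + y + z == j))).
  by apply: eq_bigr => z _; rewrite mulnC mulnb.
rewrite (pick (fun z => ((x : nat) + y + z == j))).
by congr (nat_of_bool _); apply/eqP/eqP; lia.
Qed.

Lemma count2c d j : (j < d)%N ->
  \sum_(x < d) \sum_(y < d) \sum_(z < d) (((x : nat) + y + z == j) && (y == z)) = (j %/ 2).+1.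
Proof.
move=> hj; rewrite -(sum_half hj) exchange_big; apply: eq_bigr => y _.
rewrite -(@La d _ j hj); apply: eq_bigr => x _.
transitivity (\sum_(z < d) ((y == z) * ((x : nat) + y + z == j))).
  by apply: eq_bigr => z _; rewrite mulnC mulnb.
rewrite (pick (fun z => ((x : nat) + y + z == j))).
by congr (nat_of_bool _); apply/eqP/eqP; lia.
Qed.

Lemma count3 d j : (j < d)%N ->
  \sum_(x < d) \sum_(y < d) \sum_(z < d) [&& (x : nat) + y + z == j, x == y & y == z]
  = (j %% 3 == 0).
Proof.
move=> hj.
transitivity (\sum_(x < d) ((x : nat) == j %/ 3) * (j %% 3 == 0)).
  apply: eq_bigr => x _.
  transitivity (\sum_(y < d) ((x == y) * \sum_(z < d) ((x == z) * ((x : nat) + x + z == j)))).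
    apply: eq_bigr => y _; rewrite big_distrr /=; apply: eq_bigr => z _.
    case: (eqVneq x y) => [<-|hxy] /=; first by rewrite mul1n mulnb andbC.
    by rewrite andbF mul0n.
  rewrite (pick (fun y => \sum_(z < d) ((x == z) * ((x : nat) + x + z == j)))).
  rewrite (pick (fun z => ((x : nat) + x + z == j))).
  rewrite mulnb; congr (nat_of_bool _); case: eqP => h1; case: eqP => h2; case: eqP => h3 //=; exfalso; lia.
rewrite -big_distrl /= sum_eq_ord.
have -> : (j %/ 3 < d)%N by lia.
by rewrite mul1n.
Qed.

Lemma sum3D d (f g : 'I_d -> 'I_d -> 'I_d -> nat) :
  \sum_(x < d) \sum_(y < d) \sum_(z < d) (f x y z + g x y z)
  = \sum_(x < d) \sum_(y < d) \sum_(z < d) f x y z + \sum_(x < d) \sum_(y < d) \sum_(z < d) g x y z.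
Proof.
rewrite -big_split; apply: eq_bigr => x _; rewrite -big_split; apply: eq_bigr => y _.
by rewrite -big_split.
Qed.

Lemma sum3M d c (f : 'I_d -> 'I_d -> 'I_d -> nat) :
  \sum_(x < d) \sum_(y < d) \sum_(z < d) (c * f x y z)
  = c * \sum_(x < d) \sum_(y < d) \sum_(z < d) f x y z.
Proof.
rewrite big_distrr; apply: eq_bigr => x _; rewrite big_distrr; apply: eq_bigr => y _.
by rewrite big_distrr.
Qed.

End Counting.

Section Main.
Variable F : fieldType.
Variable d : nat.
Local Notation n := (N d).

Definition idx (a : mono d) : 'I_n := enum_rank a.
Lemma monK i : idx (mon i) = i. Proof. exact: enum_valK. Qed.
Lemma idxK a : mon (idx a) = a. Proof. exact: enum_rankK. Qed.
Lemma eq_mon i a : (mon i == a) = (i == idx a).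
Proof. by apply/eqP/eqP => [<-|->]; rewrite ?monK ?idxK. Qed.

Definition act (s : 'S_3) (a : mono d) : mono d := [ffun l => a ((s^-1)%g l)].
Lemma act_mul s t a : act (s * t)%g a = act t (act s a).
Proof. by apply/ffunP => l; rewrite !ffunE invMg permM. Qed.
Lemma act1 a : act 1%g a = a.
Proof. by apply/ffunP => l; rewrite !ffunE invg1 perm1. Qed.

Definition e (a : mono d) : 'rV[F]_n := delta_mx 0 (idx a).

Lemma mx_ext (A B : 'M[F]_n) : (forall a, e a *m A = e a *m B) -> A = B.
Proof.
move=> H; apply/row_matrixP => i; rewrite !rowE -(monK i); exact: H.
Qed.

Lemma eP s a : e a *m Pmx F d s = e (act s a).
Proof.
rewrite /e -rowE; apply/rowP => k; rewrite !mxE eq_mon idxK /=.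
by rewrite /act; congr (_ %:R); apply/eqP/eqP => [->|->].
Qed.

Lemma PmxM s t : Pmx F d s *m Pmx F d t = Pmx F d (s * t)%g.
Proof. by apply: mx_ext => a; rewrite mulmxA !eP act_mul. Qed.

Lemma Pmx1 : Pmx F d 1%g = 1%:M.
Proof. by apply: mx_ext => a; rewrite eP act1 mulmx1. Qed.

Lemma mdeg_act s a : mdeg (act s a) = mdeg a.
Proof.
rewrite /mdeg (reindex_inj (@perm_inj _ s)) /=.
by apply: eq_bigr => k _; rewrite ffunE permK.
Qed.

Definition Pi j : 'M[F]_n := \matrix_(i, k) ((i == k) && (mdeg (mon i) == j))%:R.

Lemma ePi j a : e a *m Pi j = (mdeg a == j)%:R *: e a.
Proof.
rewrite /e -rowE; apply/rowP => k; rewrite !mxE idxK.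
by rewrite eqxx eq_sym; case: (mdeg a == j); case: (k == idx a); rewrite ?mulr1 ?mulr0 ?mul1r ?mul0r.
Qed.

Lemma Dmx_Pi j : Dmx F d j = 1%:M - Pi j.
Proof.
apply/matrixP => i k; rewrite !mxE.
by case: (i == k); case: (mdeg (mon i) == j); rewrite /= ?subrr ?subr0.
Qed.

Lemma PiP j s : Pi j *m Pmx F d s = Pmx F d s *m Pi j.
Proof.
apply: mx_ext => a; rewrite !mulmxA eP ePi -scalemxAl eP ePi mdeg_act.
by [].
Qed.

Lemma PiPi j : Pi j *m Pi j = Pi j.
Proof.
apply: mx_ext => a; rewrite mulmxA ePi -scalemxAl ePi scalerA.
by case: (mdeg a == j); rewrite ?mulr1 ?mulr0.
Qed.


Definition Ecoef (a b : mono d) : F :=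
  \sum_(k < 3) (if lower_k k a b then ((a k : nat) * (d - a k))%:R else 0).

Lemma EmxE a b : Emx F d (idx a) (idx b) = Ecoef a b.
Proof. by rewrite mxE !idxK. Qed.

Lemma lower_act (s : {perm 'I_3}) (m : 'I_3) (a b : mono d) : lower_k (s m) (act s a) b = lower_k m a (act s^-1 b).
Proof.
rewrite /lower_k !ffunE permK invgK; congr (_ && _).
apply/forallP/forallP => H l.
  apply/implyP => hl; have := H (s l); rewrite !ffunE permK (inj_eq perm_inj) hl.
  by rewrite /= invgK.
apply/implyP => hl; have := H (s^-1 l)%g.
rewrite !ffunE invgK permKV; have -> : (s^-1%g l != m) by apply: contra hl => /eqP <-; rewrite permKV.
by [].
Qed.

Lemma Ecoef_act s a b : Ecoef (act s a) b = Ecoef a (act s^-1 b).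
Proof.
rewrite /Ecoef (reindex_inj (@perm_inj _ s)) /=.
by apply: eq_bigr => m _; rewrite lower_act ffunE permK.
Qed.

Lemma eE a : e a *m Emx F d = \row_k Ecoef a (mon k).
Proof. by rewrite /e -rowE; apply/rowP => k; rewrite !mxE idxK. Qed.

Lemma EP s : Emx F d *m Pmx F d s = Pmx F d s *m Emx F d.
Proof.
apply: mx_ext => a; rewrite !mulmxA eP !eE; apply/rowP => k.
rewrite !mxE (bigD1 (idx (act s^-1 (mon k)))) //= big1 ?addr0.
  rewrite !mxE idxK Ecoef_act.
  suff -> : (mon k == [ffun l => act s^-1 (mon k) ((s^-1)%g l)]) by rewrite mulr1.
  by apply/eqP/ffunP => l; rewrite !ffunE invgK permKV.
move=> l hl; rewrite !mxE.
suff -> : (mon k == [ffun l0 => mon l ((s^-1)%g l0)]) = false by rewrite mulr0.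
apply: contraNF hl => /eqP hk; rewrite -eq_mon hk; apply/eqP/ffunP => m.
by rewrite !ffunE invgK permK.
Qed.


Lemma EmxE' i k : Emx F d i k = Ecoef (mon i) (mon k).
Proof. by rewrite mxE. Qed.

Lemma lower_deg k (a b : mono d) : lower_k k a b -> mdeg a = (mdeg b).+1.
Proof.
case/andP => /eqP hk /forallP H.
rewrite /mdeg (bigD1 k) //= [in RHS](bigD1 k) //= hk addSn; congr (_ + _).+1.
by apply: eq_bigr => l hl; have := H l; rewrite hl => /eqP ->.
Qed.

Lemma Ecoef_deg (a b : mono d) : Ecoef a b != 0 -> mdeg a = (mdeg b).+1.
Proof.
move=> H; case: (boolP [exists k, lower_k k a b]).
  by case/existsP => k /lower_deg.
move/existsPn => H'; case/eqP: H; apply: big1 => k _.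
by rewrite (negbTE (H' k)).
Qed.

Lemma mulPil j (A : 'M[F]_n) i k : (Pi j *m A) i k = (mdeg (mon i) == j)%:R * A i k.
Proof.
rewrite !mxE (bigD1 i) //= big1 ?addr0; first by rewrite !mxE eqxx.
by move=> l hl; rewrite !mxE eq_sym (negbTE hl) mul0r.
Qed.

Lemma mulPir j (A : 'M[F]_n) i k : (A *m Pi j) i k = A i k * (mdeg (mon k) == j)%:R.
Proof.
rewrite !mxE (bigD1 k) //= big1 ?addr0; first by rewrite !mxE eqxx.
by move=> l hl; rewrite !mxE (negbTE hl) mulr0.
Qed.

Lemma PiE j : Pi j.+1 *m Emx F d = Pi j.+1 *m Emx F d *m Pi j.
Proof.
apply/matrixP => i k; rewrite mulPir !mulPil EmxE'.
have [->|] := eqVneq (Ecoef (mon i) (mon k)) 0; first by rewrite !(mulr0, mul0r).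
move/Ecoef_deg => ->; rewrite eqSS.
by case: (mdeg (mon k) == j); rewrite ?mulr1 ?mulr0 ?mul0r.
Qed.

Lemma Pi0E : Pi 0 *m Emx F d = 0.
Proof.
apply/matrixP => i k; rewrite mulPil EmxE' mxE.
have [->|] := eqVneq (Ecoef (mon i) (mon k)) 0; first by rewrite mulr0.
by move/Ecoef_deg => ->; rewrite mul0r.
Qed.


Definition up (b : mono d) : mono d :=
  [ffun k => if k == ord0 then insubd (b k) (b k).+1 else b k].

Lemma up0 (b : mono d) : ((b ord0).+1 < d)%N -> (up b ord0 : nat) = (b ord0).+1.
Proof. by move=> h; rewrite ffunE eqxx val_insubd h. Qed.

Lemma upD (b : mono d) k : k != ord0 -> up b k = b k.
Proof. by move=> h; rewrite ffunE (negbTE h). Qed.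

Lemma up_lower (b : mono d) : ((b ord0).+1 < d)%N -> lower_k ord0 (up b) b.
Proof.
move=> h; rewrite /lower_k up0 // eqxx /=; apply/forallP => l.
by apply/implyP => hl; rewrite upD.
Qed.

Lemma lower_up_other (b : mono d) k (x : mono d) : ((b ord0).+1 < d)%N -> lower_k k (up b) x -> x != b ->
  (x ord0 : nat) = (b ord0).+1 /\ k != ord0.
Proof.
move=> h /andP[/eqP hk /forallP H] hx.
have [ek|nk] := eqVneq k ord0.
  case/eqP: hx; apply/ffunP => l; have [->|nl] := eqVneq l ord0.
    by apply/val_inj; move: hk; rewrite ek up0 // => -[].
  by have := H l; rewrite ek nl /= upD // => /eqP.
split => //; have := H ord0; rewrite eq_sym nk /= => /eqP <-.
by rewrite up0.
Qed.

Lemma Ecoef_up (b : mono d) : ((b ord0).+1 < d)%N ->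
  Ecoef (up b) b = ((b ord0).+1 * (d - (b ord0).+1))%:R.
Proof.
move=> h; rewrite /Ecoef (bigD1 ord0) //= up_lower // big1 ?addr0 ?up0 //.
move=> k hk; case: ifP => // /andP[_ /forallP H].
have := H ord0; rewrite eq_sym hk /= -(inj_eq val_inj) /= up0 // => /eqP /esym /n_Sn [].
Qed.

Lemma Ecoef_up_other (b x : mono d) : ((b ord0).+1 < d)%N -> Ecoef (up b) x != 0 -> x != b ->
  (x ord0 : nat) = (b ord0).+1 /\ (mdeg (up b) = (mdeg x).+1).
Proof.
move=> h H hx; case: (boolP [exists k, lower_k k (up b) x]).
  case/existsP => k hk; have [-> _] := lower_up_other h hk hx.
  by split => //; apply: lower_deg hk.
move/existsPn => H'; case/eqP: H; apply: big1 => k _.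
by rewrite (negbTE (H' k)).
Qed.


Hypothesis charF0 : [pchar F] =i pred0.

Lemma natf_eq0 m : ((m%:R : F) == 0) = (m == 0)%N.
Proof. by have /pcharf0P := charF0; apply. Qed.

Lemma natf_inj m k : (m%:R : F) = k%:R -> m = k.
Proof.
wlog le : m k / (m <= k)%N => [H|].
  by case: (leqP m k) => h; [exact: H | move/esym/H => ->; rewrite // ltnW].
move=> /eqP; rewrite eq_sym -subr_eq0 -natrB // natf_eq0 subn_eq0 => h.
by apply/eqP; rewrite eqn_leq le h.
Qed.

Lemma mdeg0 (x : mono d) : (x ord0 <= mdeg x)%N.
Proof. by rewrite /mdeg (bigD1 ord0) //= leq_addr. Qed.

Lemma surj_step j (U : 'M[F]_n) (b : mono d) : (j.+2 <= d)%N -> mdeg b = j ->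
  (Pi j.+1 *m Emx F d <= U)%MS ->
  (forall x, mdeg x = j -> (x ord0 : nat) = (b ord0).+1 -> (e x <= U)%MS) ->
  (e b <= U)%MS.
Proof.
move=> hd hb hU IH.
have hb0 : ((b ord0).+1 < d)%N by have := mdeg0 b; rewrite hb; lia.
set v := e (up b) *m Emx F d.
have hv : (v <= U)%MS.
  apply: submx_trans hU.
  have -> : v = e (up b) *m (Pi j.+1 *m Emx F d).
    by rewrite mulmxA ePi (lower_deg (up_lower hb0)) hb eqxx scale1r.
  exact: submxMl.
have hc : Ecoef (up b) b != 0.
  by rewrite Ecoef_up // natf_eq0 muln_eq0 negb_or /=; lia.
have -> : e b = (Ecoef (up b) b)^-1 *: (v - \sum_(k | k != idx b) v 0 k *: delta_mx 0 k).
  rewrite {1}[v]row_sum_delta (bigD1 (idx b)) //= addrK /v eE mxE idxK.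
  by rewrite scalerA mulVf // scale1r.
apply: scalemx_sub; apply: addmx_sub => //; rewrite eqmx_opp.
apply: summx_sub => k hk.
have [->|nz] := eqVneq (v 0 k) 0; first by rewrite scale0r sub0mx.
apply: scalemx_sub; rewrite -(monK k) -/(e _).
move: nz; rewrite /v eE mxE => nz.
have hx : mon k != b by rewrite eq_mon.
have [h1 h2] := Ecoef_up_other hb0 nz hx.
apply: IH => //.
by move: h2; rewrite (lower_deg (up_lower hb0)) hb => -[].
Qed.


Lemma surj j : (j.+2 <= d)%N -> (Pi j <= Pi j.+1 *m Emx F d)%MS.
Proof.
move=> hd; set U := Pi j.+1 *m Emx F d.
have key : forall m b, mdeg b = j -> (j - b ord0 <= m)%N -> (e b <= U)%MS.
  elim=> [|m IH] b hb hm; apply: (surj_step hd hb (submx_refl U)) => x hx hx0.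
    by have := mdeg0 x; rewrite hx hx0; lia.
  by apply: IH hx _; lia.
apply/row_subP => i; rewrite rowE -(monK i) -/(e _) ePi.
case: eqP => h; last by rewrite scale0r sub0mx.
by apply: scalemx_sub; apply: (key j) => //; rewrite leq_subr.
Qed.


Definition mk (x y z : 'I_d) : mono d :=
  [ffun l => if l == k0 then x else if l == k1 then y else z].

Lemma ord3P (l : 'I_3) : [\/ l = k0, l = k1 | l = k2].
Proof.
case: l => [[|[|[|m]]] hl].
- by apply: Or31; apply: val_inj.
- by apply: Or32; apply: val_inj.
- by apply: Or33; apply: val_inj.
- by [].
Qed.

Lemma mono_eq3 (f g : mono d) : (f == g) = [&& f k0 == g k0, f k1 == g k1 & f k2 == g k2].
Proof.
apply/eqP/and3P => [->|[/eqP h0 /eqP h1 /eqP h2]]; first by rewrite !eqxx.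
by apply/ffunP => l; case: (ord3P l) => ->.
Qed.

Lemma mk0 x y z : mk x y z k0 = x. Proof. by rewrite ffunE. Qed.
Lemma mk1 x y z : mk x y z k1 = y. Proof. by rewrite ffunE. Qed.
Lemma mk2 x y z : mk x y z k2 = z. Proof. by rewrite ffunE. Qed.

Lemma mkK (a : mono d) : mk (a k0) (a k1) (a k2) = a.
Proof. by apply/eqP; rewrite mono_eq3 mk0 mk1 mk2 !eqxx. Qed.

Lemma sum_mono (f : mono d -> F) :
  \sum_(a : mono d) f a = \sum_(x < d) \sum_(y < d) \sum_(z < d) f (mk x y z).
Proof.
transitivity (\sum_(q : 'I_d * ('I_d * 'I_d)) f (mk q.1 q.2.1 q.2.2)).
  rewrite (reindex (fun q : 'I_d * ('I_d * 'I_d) => mk q.1 q.2.1 q.2.2)) //.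
  exists (fun a : mono d => (a k0, (a k1, a k2))) => [[x [y z]]|a] _ /=.
    by rewrite mk0 mk1 mk2.
  by rewrite mkK.
rewrite -(pair_bigA _ (fun x (p : 'I_d * 'I_d) => f (mk x p.1 p.2))) /=; apply: eq_bigr => x _.
by rewrite -(pair_bigA _ (fun y z => f (mk x y z))) /=.
Qed.

Lemma mdeg_mk x y z : mdeg (mk x y z) = (x + y + z)%N.
Proof.
rewrite /mdeg !big_ord_recr big_ord0 /= add0n.
have -> : (@ord_max 2) = k2 by apply: val_inj.
have -> : widen_ord (leqnSn 2) (@ord_max 1) = k1 by apply: val_inj.
have -> : widen_ord (leqnSn 2) (widen_ord (leqnSn 1) (@ord_max 0)) = k0 by apply: val_inj.
by rewrite mk0 mk1 mk2.
Qed.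

Ltac solve_eqs := repeat (rewrite ?eqxx /=; match goal with |- context[?a == ?b] => case: (eqVneq a b) => [?|?]; try subst end); try done; try (match goal with H : is_true (?a != ?a) |- _ => by rewrite eqxx in H end).

Lemma fix_t01 x y z : (mk x y z == act t01 (mk x y z)) = (x == y).
Proof.
rewrite mono_eq3 /act !ffunE /t01 tpermV !tpermE' /= ?ffunE /=.
by solve_eqs.
Qed.
Lemma fix_t02 x y z : (mk x y z == act t02 (mk x y z)) = (x == z).
Proof.
rewrite mono_eq3 /act !ffunE /t02 tpermV !tpermE' /= ?ffunE /=.
by solve_eqs.
Qed.
Lemma fix_t12 x y z : (mk x y z == act t12 (mk x y z)) = (y == z).
Proof.
rewrite mono_eq3 /act !ffunE /t12 tpermV !tpermE' /= ?ffunE /=.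
by solve_eqs.
Qed.
Lemma fix_c1 x y z : (mk x y z == act c1 (mk x y z)) = (x == y) && (y == z).
Proof.
rewrite mono_eq3 /act !ffunE /c1 /t01 /t12 invMg !tpermV !permM !tpermE' /= ?ffunE /=.
by solve_eqs.
Qed.
Lemma fix_c2 x y z : (mk x y z == act c2 (mk x y z)) = (x == y) && (y == z).
Proof.
rewrite mono_eq3 /act !ffunE /c2 /t01 /t12 invMg !tpermV !permM !tpermE' /= ?ffunE /=.
by solve_eqs.
Qed.

Lemma sum_mon (f : mono d -> F) : \sum_(i : 'I_n) f (mon i) = \sum_(a : mono d) f a.
Proof.
rewrite (reindex idx); first by apply: eq_bigr => a _; rewrite idxK.
by exists (@mon d) => [a|i] _; rewrite ?idxK ?monK.
Qed.

Section Sym.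
Variable chi : 'S_3 -> F.
Hypothesis chiM : forall s t, chi (s * t)%g = chi s * chi t.
Hypothesis chiV : forall s, chi (s^-1)%g = chi s.
Hypothesis chi2 : forall s, chi s * chi s = 1.

Definition Sym : 'M[F]_n := \sum_(s : 'S_3) chi s *: Pmx F d s.

Lemma SymP t : Sym *m Pmx F d t = chi t *: Sym.
Proof.
rewrite /Sym mulmx_suml scaler_sumr.
under eq_bigr do rewrite -scalemxAl PmxM.
rewrite (reindex_inj (mulIg t^-1)%g) /=.
apply: eq_bigr => s _; rewrite mulgVK chiM chiV scalerA mulrC.
by [].
Qed.

Lemma PSym t : Pmx F d t *m Sym = chi t *: Sym.
Proof.
rewrite /Sym mulmx_sumr scaler_sumr.
under eq_bigr do rewrite -scalemxAr PmxM.
rewrite (reindex_inj (mulgI t^-1)%g) /=.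
apply: eq_bigr => s _; rewrite mulKVg chiM chiV scalerA.
by [].
Qed.

Lemma PiSym j : Pi j *m Sym = Sym *m Pi j.
Proof.
rewrite /Sym mulmx_suml mulmx_sumr; apply: eq_bigr => s _.
by rewrite -scalemxAl -scalemxAr PiP.
Qed.

Lemma ESym : Emx F d *m Sym = Sym *m Emx F d.
Proof.
rewrite /Sym mulmx_suml mulmx_sumr; apply: eq_bigr => s _.
by rewrite -scalemxAl -scalemxAr EP.
Qed.

Lemma SymSym : Sym *m Sym = 6%:R *: Sym.
Proof.
rewrite {1}/Sym mulmx_suml.
under eq_bigr do rewrite -scalemxAl PSym scalerA chi2 scale1r.
by rewrite sumr_const card_Sn -scaler_nat.
Qed.

Definition Q j : 'M[F]_n := 6%:R^-1 *: (Pi j *m Sym).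

Lemma six_neq0 : (6%:R : F) != 0. Proof. by rewrite natf_eq0. Qed.

Lemma QQ j : Q j *m Q j = Q j.
Proof.
rewrite /Q -scalemxAl -scalemxAr scalerA mulmxA -(mulmxA (Pi j)) -PiSym.
rewrite mulmxA PiPi -mulmxA SymSym -scalemxAr scalerA -mulrA mulVf ?mulr1 //.
exact: six_neq0.
Qed.

Definition Cap : 'M[F]_n := (\bigcap_(s : 'S_3) kermx (Pmx F d s - (chi s)%:M))%MS.

Lemma QD j : Q j *m Dmx F d j = 0.
Proof.
rewrite /Q Dmx_Pi -scalemxAl mulmxBr mulmx1 -mulmxA -PiSym mulmxA PiPi.
by rewrite subrr scaler0.
Qed.

Lemma QP j s : Q j *m Pmx F d s = chi s *: Q j.
Proof. by rewrite /Q -scalemxAl -mulmxA SymP -scalemxAr !scalerA mulrC. Qed.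

Lemma Q_char m (Y : 'M[F]_(m, n)) j :
  (Y <= Q j)%MS = (Y <= kermx (Dmx F d j))%MS && (Y <= Cap)%MS.
Proof.
apply/idP/andP => [hY|[h1 h2]].
  split; apply: submx_trans hY _.
    by apply/sub_kermxP; rewrite QD.
  apply/sub_bigcapmxP => s _; apply/sub_kermxP.
  by rewrite mulmxBr QP mul_mx_scalar subrr.
have YP : forall s, Y *m Pmx F d s = chi s *: Y.
  move=> s; have /sub_kermxP := submx_trans h2 (bigcapmx_inf s (erefl true) (submx_refl _)).
  by rewrite mulmxBr mul_mx_scalar => /eqP; rewrite subr_eq0 => /eqP.
have YPi : Y *m Pi j = Y.
  by move/sub_kermxP: h1; rewrite Dmx_Pi mulmxBr mulmx1 => /eqP; rewrite subr_eq0 => /eqP <-.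
have YS : Y *m Sym = 6%:R *: Y.
  rewrite /Sym mulmx_sumr; under eq_bigr do rewrite -scalemxAr YP scalerA chi2 scale1r.
  by rewrite sumr_const card_Sn -scaler_nat.
have -> : Y = Y *m Q j.
  rewrite /Q -scalemxAr mulmxA YPi YS scalerA mulVf ?scale1r //.
  exact: six_neq0.
exact: submxMl.
Qed.

Lemma iso_rank j : \rank (@isotypic F d j chi) = (\rank (Q j) - \rank (Q j *m Emx F d))%N.
Proof.
rewrite -(mxrank_mul_ker (Q j) (Emx F d)) addKn.
have h1 : (@isotypic F d j chi <= Q j :&: kermx (Emx F d))%MS.
  rewrite sub_capmx Q_char; apply/andP; split; last first.
    exact: submx_trans (capmxSl _ _) (capmxSr _ _).
  apply/andP; split; last exact: capmxSr.
  exact: submx_trans (capmxSl _ _) (capmxSl _ _).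
have h2 : (Q j :&: kermx (Emx F d) <= @isotypic F d j chi)%MS.
  have := submx_refl (Q j :&: kermx (Emx F d))%MS.
  rewrite {1}sub_capmx Q_char => /andP[/andP[hD hC] hE].
  by rewrite /isotypic !sub_capmx hD hE hC.
by apply/eqP; rewrite eqn_leq !mxrankS.
Qed.

Lemma QE_rank j : (j.+2 <= d)%N -> \rank (Q j.+1 *m Emx F d) = \rank (Q j).
Proof.
move=> hd.
have e1 : Q j.+1 *m Emx F d = (Pi j.+1 *m Emx F d) *m Q j.
  rewrite /Q -scalemxAl -scalemxAr -mulmxA -ESym mulmxA PiE.
  by rewrite (mulmxA _ (Pi j)) -(mulmxA _ (Pi j) (Pi j)) PiPi.
apply/eqP; rewrite eqn_leq; apply/andP; split; apply: mxrankS.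
  by rewrite e1 submxMl.
have [X hX] := submxP (surj hd).
have -> : Q j = X *m (Q j.+1 *m Emx F d).
  rewrite /Q -!scalemxAl -!scalemxAr hX -!mulmxA ESym.
  by [].
exact: submxMl.
Qed.

Lemma Q0E : Q 0 *m Emx F d = 0.
Proof. by rewrite /Q -scalemxAl -mulmxA -ESym mulmxA Pi0E mul0mx scaler0. Qed.

Lemma chi1 : chi 1%g = 1.
Proof. by have := chi2 1%g; rewrite -chiM mulg1. Qed.

Lemma trPiSym j : \tr (Pi j *m Sym) =
  \sum_(x < d) \sum_(y < d) \sum_(z < d) (((x : nat) + y + z == j)%:R *
     (1 + chi t01 * (x == y)%:R + chi t02 * (x == z)%:R + chi t12 * (y == z)%:R
        + chi c1 * ((x == y) && (y == z))%:R + chi c2 * ((x == y) && (y == z))%:R)).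
Proof.
transitivity (\sum_(a : mono d) (mdeg a == j)%:R * \sum_(s : 'S_3) chi s * (a == act s a)%:R).
  rewrite /mxtrace -sum_mon; apply: eq_bigr => i _.
  rewrite mulPil /Sym summxE; congr (_ * _); apply: eq_bigr => s _.
  by rewrite !mxE.
rewrite sum_mono; apply: eq_bigr => x _; apply: eq_bigr => y _; apply: eq_bigr => z _.
rewrite mdeg_mk sumS3 fix_t01 fix_t02 fix_t12 fix_c1 fix_c2.
have -> : (mk x y z == act 1 (mk x y z)) = true by rewrite act1 eqxx.
by rewrite chi1 mulr1.
Qed.

Lemma sum3_nat (f g : 'I_d -> 'I_d -> 'I_d -> nat) (eps : F) :
  \sum_(x < d) \sum_(y < d) \sum_(z < d) ((f x y z)%:R + eps * (g x y z)%:R)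
  = (\sum_(x < d) \sum_(y < d) \sum_(z < d) f x y z)%:R
    + eps * (\sum_(x < d) \sum_(y < d) \sum_(z < d) g x y z)%:R.
Proof.
rewrite !natr_sum mulr_sumr -big_split; apply: eq_bigr => x _.
rewrite !natr_sum mulr_sumr -big_split; apply: eq_bigr => y _.
by rewrite !natr_sum mulr_sumr -big_split.
Qed.

Lemma trPiSym_val (eps : F) j : (j < d)%N ->
  chi t01 = eps -> chi t02 = eps -> chi t12 = eps ->
  \tr (Pi j *m Sym) =
  (\sum_(x < d) \sum_(y < d) \sum_(z < d) ((x : nat) + y + z == j) + 2 * (j %% 3 == 0))%N%:R
  + eps * (3 * (j %/ 2).+1)%N%:R.
Proof.
move=> hj h1 h2 h3.
have hc1 : chi c1 = 1 by rewrite /c1 chiM h1 -h3 chi2.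
have hc2 : chi c2 = 1 by rewrite /c2 chiM h3 -h1 chi2.
rewrite trPiSym h1 h2 h3 hc1 hc2.
rewrite (eq_bigr (fun x : 'I_d => \sum_(y < d) \sum_(z < d)
   ((((x : nat) + y + z == j) + 2 * [&& (x : nat) + y + z == j, x == y & y == z])%N%:R
    + eps * ((((x : nat) + y + z == j) && (x == y)) + (((x : nat) + y + z == j) && (x == z))
         + (((x : nat) + y + z == j) && (y == z)))%N%:R))); last first.
  move=> x _; apply: eq_bigr => y _; apply: eq_bigr => z _.
  case: ((x : nat) + y + z == j); case: (x == y); case: (x == z); case: (y == z) => /=; ring.
rewrite sum3_nat; congr (_%:R + eps * _%:R).
  by rewrite sum3D sum3M count3.
rewrite !sum3D count2a // count2b // count2c //; lia.
Qed.

Lemma rankQ_val (eps : F) j : (j < d)%N ->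
  chi t01 = eps -> chi t02 = eps -> chi t12 = eps ->
  (6 * \rank (Q j))%N%:R =
  (\sum_(x < d) \sum_(y < d) \sum_(z < d) ((x : nat) + y + z == j) + 2 * (j %% 3 == 0))%N%:R
  + eps * (3 * (j %/ 2).+1)%N%:R.
Proof.
move=> hj h1 h2 h3; rewrite natrM -rank_idem ?QQ //.
by rewrite /Q mxtraceZ mulrA divff ?six_neq0 // mul1r (trPiSym_val hj h1 h2 h3).
Qed.

End Sym.


Definition sg (s : 'S_3) : F := (-1) ^+ odd_perm s.

Lemma sgM s t : sg (s * t)%g = sg s * sg t.
Proof. by rewrite /sg odd_permM signr_addb. Qed.
Lemma sgV s : sg (s^-1)%g = sg s.
Proof. by rewrite /sg odd_permV. Qed.
Lemma sg2 s : sg s * sg s = 1.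
Proof. by rewrite /sg mulr_sign; case: odd_perm; rewrite ?opprK ?mulN1r ?mul1r ?expr0 ?expr1 ?opprK. Qed.

Lemma oM (s t : 'S_3) : (fun _ : 'S_3 => (1 : F)) (s * t)%g = (fun _ : 'S_3 => (1 : F)) s * (fun _ : 'S_3 => (1 : F)) t.
Proof. by rewrite mulr1. Qed.
Lemma oV (s : 'S_3) : (fun _ : 'S_3 => (1 : F)) (s^-1)%g = (fun _ : 'S_3 => (1 : F)) s.
Proof. by []. Qed.
Lemma o2 (s : 'S_3) : (fun _ : 'S_3 => (1 : F)) s * (fun _ : 'S_3 => (1 : F)) s = 1.
Proof. by rewrite mulr1. Qed.


Definition RT j := \rank (Q (fun _ : 'S_3 => (1 : F)) j).
Definition RS j := \rank (Q sg j).

Definition NN j := (\sum_(x < d) \sum_(y < d) \sum_(z < d) ((x : nat) + y + z == j))%N.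

Lemma NN_val j : (j < d)%N -> (NN j * 2 = j.+1 * j.+2)%N.
Proof. exact: count1. Qed.

Lemma triv_vals j : (j < d)%N ->
  (6 * RT j = NN j + 2 * (j %% 3 == 0) + 3 * (j %/ 2).+1)%N.
Proof.
move=> hj; apply: natf_inj.
by rewrite (rankQ_val oM oV o2 hj (erefl _) (erefl _) (erefl _)) mul1r -natrD.
Qed.

Lemma sgt x y : x != y -> sg (tperm x y) = -1.
Proof. by move=> h; rewrite /sg odd_tperm h expr1. Qed.

Lemma sign_vals j : (j < d)%N ->
  (6 * RS j + 3 * (j %/ 2).+1 = NN j + 2 * (j %% 3 == 0))%N.
Proof.
move=> hj; apply: natf_inj.
by rewrite natrD (rankQ_val sgM sgV sg2 hj (sgt _) (sgt _) (sgt _)) // mulN1r addrNK.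
Qed.

Lemma triv_rank j : triv F d j = (RT j - \rank (Q (fun _ : 'S_3 => (1 : F)%R) j *m Emx F d))%N.
Proof. exact: (iso_rank oM oV o2 j). Qed.

Lemma sign_rank j : sign F d j = (RS j - \rank (Q sg j *m Emx F d))%N.
Proof. exact: (iso_rank sgM sgV sg2 j). Qed.

Lemma RT0 : triv F d 0 = RT 0.
Proof. by rewrite triv_rank Q0E mxrank0 subn0. Qed.
Lemma RS0 : sign F d 0 = RS 0.
Proof. by rewrite sign_rank Q0E mxrank0 subn0. Qed.
Lemma RTS j : (j.+2 <= d)%N -> triv F d j.+1 = (RT j.+1 - RT j)%N.
Proof. by move=> h; rewrite triv_rank QE_rank. Qed.
Lemma RSS j : (j.+2 <= d)%N -> sign F d j.+1 = (RS j.+1 - RS j)%N.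
Proof. by move=> h; rewrite sign_rank QE_rank. Qed.
End Main.

Lemma main_gen (F : fieldType) (charF0 : [pchar F] =i pred0)
    (d j : nat) (hd : (3 <= d)%N) (hj : (j <= d - 1)%N) :
  [/\ (odd d && ~~ odd (d - j) ->
         (triv F d j)%:Z = ((3 * d - 2 * j - 3) %/ 6)%N%:Z - ((Posz (d - j) - 2) %/ 2)%Z
      /\ (sign F d j)%:Z = ((3 * d - 2 * j - 3) %/ 6)%N%:Z - ((Posz (d - j) - 2) %/ 2)%Z),
      (odd d && odd (d - j) ->
         (triv F d j)%:Z = ((3 * d - 2 * j - 3) %/ 6)%N%:Z - ((Posz (d - j) - 3) %/ 2)%Z
      /\ (sign F d j)%:Z = ((3 * d - 2 * j - 3) %/ 6)%N%:Z - ((Posz (d - j) - 1) %/ 2)%Z),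
      (~~ odd d && ~~ odd (d - j) ->
         (triv F d j)%:Z = ((3 * d - 2 * j) %/ 6)%N%:Z - ((Posz (d - j) - 2) %/ 2)%Z
      /\ (sign F d j)%:Z = ((3 * d - 2 * j) %/ 6)%N%:Z - ((Posz (d - j)) %/ 2)%Z) &
      (~~ odd d && odd (d - j) ->
         (triv F d j)%:Z = ((3 * d - 2 * j) %/ 6)%N%:Z - ((Posz (d - j) - 1) %/ 2)%Z
      /\ (sign F d j)%:Z = ((3 * d - 2 * j) %/ 6)%N%:Z - ((Posz (d - j) - 1) %/ 2)%Z)].
Proof.
have hjd : (j < d)%N by lia.
have hdm := modn2 d; have hdjm := modn2 (d - j).
have H : exists T S : nat, [/\ triv F d j = T, sign F d j = S &
   (j = 0%N /\ T = 1%N /\ S = 0%N) \/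
   (exists j' rT1 rT0 rS1 rS0 N1 N0, [/\ j = j'.+1, T = (rT1 - rT0)%N, S = (rS1 - rS0)%N,
       [/\ 6 * rT1 = N1 + 2 * (j %% 3 == 0) + 3 * (j %/ 2).+1,
           6 * rT0 = N0 + 2 * (j' %% 3 == 0) + 3 * (j' %/ 2).+1,
           6 * rS1 + 3 * (j %/ 2).+1 = N1 + 2 * (j %% 3 == 0) &
           6 * rS0 + 3 * (j' %/ 2).+1 = N0 + 2 * (j' %% 3 == 0)]%N &
       N1 * 2 = j.+1 * j.+2 /\ N0 * 2 = j'.+1 * j'.+2]%N)].
  exists (triv F d j), (sign F d j); split => //.
  case: j hj hjd {hdjm} => [|j'] hj hjd.
    left; split => //.
    have t6 := triv_vals charF0 hjd; have s6 := sign_vals charF0 hjd.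
    have n0 := NN_val hjd.
    rewrite (@RT0 F d charF0) (@RS0 F d charF0). change (RT F d 0%N = 1%N /\ RS F d 0%N = 0%N); split; lia.
  right.
  have hj' : (j' < d)%N by lia.
  have hj2 : (j'.+2 <= d)%N by lia.
  exists j', (RT F d j'.+1), (RT F d j'), (RS F d j'.+1), (RS F d j'), (NN d j'.+1), (NN d j').
  split => //.
  - exact: RTS.
  - exact: RSS.
  - split; [exact: triv_vals | exact: triv_vals | exact: sign_vals | exact: sign_vals].
  - by split; apply: NN_val.
have [T [S [-> -> HH]]] := H.
split => /andP[h1 h2]; rewrite ?h1 ?(negbTE h1) ?h2 ?(negbTE h2) /= in hdm hdjm;
  (case: HH => [[hj0 [hT hS]] | [j' [rT1 [rT0 [rS1 [rS0 [N1 [N0 [hj' hT hS [e1 e2 e3 e4] [n1 n0]]]]]]]]]]);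
  split; lia.
Qed.

Theorem theorem5p3 (F : closedFieldType) (charF0 : [pchar F] =i pred0)
    (d j : nat) (hd : (3 <= d)%N) (hj : (j <= d - 1)%N) :
  [/\ (odd d && ~~ odd (d - j) ->
         (triv F d j)%:Z = ((3 * d - 2 * j - 3) %/ 6)%N%:Z - ((Posz (d - j) - 2) %/ 2)%Z
      /\ (sign F d j)%:Z = ((3 * d - 2 * j - 3) %/ 6)%N%:Z - ((Posz (d - j) - 2) %/ 2)%Z),
      (odd d && odd (d - j) ->
         (triv F d j)%:Z = ((3 * d - 2 * j - 3) %/ 6)%N%:Z - ((Posz (d - j) - 3) %/ 2)%Z
      /\ (sign F d j)%:Z = ((3 * d - 2 * j - 3) %/ 6)%N%:Z - ((Posz (d - j) - 1) %/ 2)%Z),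
      (~~ odd d && ~~ odd (d - j) ->
         (triv F d j)%:Z = ((3 * d - 2 * j) %/ 6)%N%:Z - ((Posz (d - j) - 2) %/ 2)%Z
      /\ (sign F d j)%:Z = ((3 * d - 2 * j) %/ 6)%N%:Z - ((Posz (d - j)) %/ 2)%Z) &
      (~~ odd d && odd (d - j) ->
         (triv F d j)%:Z = ((3 * d - 2 * j) %/ 6)%N%:Z - ((Posz (d - j) - 1) %/ 2)%Z
      /\ (sign F d j)%:Z = ((3 * d - 2 * j) %/ 6)%N%:Z - ((Posz (d - j) - 1) %/ 2)%Z)].
Proof. exact: main_gen. Qed.
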